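(* Assume the setting described in the context, and let $i\in\{1,\dots,t\}$. Let $\mathbf p\in\mathcal C^*$ be divisible by none of $\pi_1,\dots,\pi_{i-1}$. Then there exist a unique $j\in\mathbb N$ and a unique $\mathbf q\in\mathcal C^*$ divisible by none of $\pi_1,\dots,\pi_i$ such that $\mathbf p=j\pi_i+\mathbf q$ (in transvectant terms: $\mathbb T(\mathbf p)\equiv\vartheta_i^j\,\mathbb T(\mathbf q)$).
   Context: $\mathbb N=\{0,1,2,\dots\}$. For a real square matrix $A_0$ put $\mathcal D_{A_0}f(\mathbf x)=f'(\mathbf x)A_0\mathbf x$. Let $(\acute X,\acute Y,\acute Z),(\grave X,\grave Y,\grave Z)$ be $\mathfrak{sl}_2$ triads ($[X,Y]=Z,[Z,X]=2X,[Z,Y]=-2Y$) of real $n\times n$ resp. $m\times m$ matrices; $\acute{\mathcal X}=\mathcal D_{\acute Y},\acute{\mathcal Y}=\mathcal D_{\acute X},\acute{\mathcal Z}=\mathcal D_{\acute Z}$ on $\mathbb R[[\mathbf x]]$, similarly on $\mathbb R[[\mathbf y]]$; $\acute{\mathcal J}=\ker\acute{\mathcal X}$, $\grave{\mathcal J}=\ker\grave{\mathcal X}$. Hilbert bases $\alpha=(\alpha_1,\dots,\alpha_p)$ of $\acute{\mathcal J}$ and $\beta=(\beta_1,\dots,\beta_q)$ of $\grave{\mathcal J}$ consist of homogeneous weight invariants (eigenvectors of $\acute{\mathcal Z}$ resp. $\grave{\mathcal Z}$ with weights $\widehat\alpha_i,\widehat\beta_j$) whose monomials span by countable linear combinations;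 $\widehat\alpha\mathbf k=\sum\widehat\alpha_ik_i$, $\widehat\beta\boldsymbol\ell=\sum\widehat\beta_j\ell_j$. $\acute A\subset\mathbb N^p,\grave A\subset\mathbb N^q$ are standard preferred sets (monomials $\alpha^{\mathbf k}$, $\mathbf k\in\acute A$, pairwise distinct, linearly independent, spanning $\acute{\mathcal J}$ by countable combinations; $\acute A$ closed under componentwise-smaller vectors; same for $\grave A$). $\mathcal C=\{(\mathbf k;\boldsymbol\ell;s)\in\mathbb N^{p+q+1}:s\le\widehat\alpha\mathbf k,s\le\widehat\beta\boldsymbol\ell\}$ (the element $(\mathbf k;\boldsymbol\ell;s)$ represents the transvectant $\mathbb T(\mathbf k;\boldsymbol\ell;s)=(\alpha^{\mathbf k},\beta^{\boldsymbol\ell})^{(s)}$, defined by $(f,g)^{(s)}=\sum_{j=0}^s(-1)^j\binom sj\frac{(\widehat f-j)!}{(\widehat f-s)!}\frac{(\widehat g-s+j)!}{(\widehat g-s)!}(\acute{\mathcal Y}^jf)(\grave{\mathcal Y}^{s-j}g)$), $\mathcal C^*=\{(\mathbf k;\boldsymbol\ell;s)\in\mathcal C:\mathbf k\in\acute A,\boldsymbol\ell\in\grave A\}$. For $\mathbf p,\mathbf r\in\mathcal C$, $\mathbf p$ is divisible by $\mathbf r$ if $\mathbf p-\mathbf r\in\mathcal C$. A prime is a nonzero element of $\mathcal C$ that is not a sum of two nonzero elements of $\mathcal C$; $\pi_1,\dots,\pi_t$ are the primes lying in $\mathcal C^*$, listed in a fixed order, and $\vartheta_i=\mathbb T(\pi_i)$.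 Equivalence $\equiv$ of a transvectant monomial $\prod\mathbb T(\mathbf p_r)^{m_r}$ with $\mathbb T(\mathbf p)$ means $\mathbf p=\sum m_r\mathbf p_r$. *)

(* Defs.v *)
(* Combinatorial skeleton of the transvectant cone C. *)
From mathcomp Require Import all_boot.
Set Implicit Arguments. Unset Strict Implicit. Unset Printing Implicit Defensive.

(* An element (k; l; s) of N^(p+q+1). *)
Definition cvec (p q : nat) : Type :=
  ({ffun 'I_p -> nat} * {ffun 'I_q -> nat} * nat)%type.

Definition cadd p q (x y : cvec p q) : cvec p q :=
  ([ffun i => x.1.1 i + y.1.1 i], [ffun j => x.1.2 j + y.1.2 j], x.2 + y.2).

Definition czero p q : cvec p q := ([ffun=> 0], [ffun=> 0], 0).

Definition cscale p q (j : nat) (x : cvec p q) : cvec p q :=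
  iter j (cadd x) (czero p q).

Definition wdeg n (w : 'I_n -> nat) (k : {ffun 'I_n -> nat}) : nat :=
  \sum_(i < n) w i * k i.

Definition inC p q (aw : 'I_p -> nat) (bw : 'I_q -> nat) (x : cvec p q) : Prop :=
  x.2 <= wdeg aw x.1.1 /\ x.2 <= wdeg bw x.1.2.

Definition inCstar p q (aw : 'I_p -> nat) (bw : 'I_q -> nat)
  (A : pred {ffun 'I_p -> nat}) (B : pred {ffun 'I_q -> nat}) (x : cvec p q) : Prop :=
  inC aw bw x /\ A x.1.1 /\ B x.1.2.

Definition cdivisible p q (aw : 'I_p -> nat) (bw : 'I_q -> nat) (x r : cvec p q) : Prop :=
  exists d, inC aw bw d /\ x = cadd r d.

Definition cprime p q (aw : 'I_p -> nat) (bw : 'I_q -> nat) (x : cvec p q) : Prop :=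
  [/\ inC aw bw x, x <> czero p q &
   ~ exists y z, [/\ inC aw bw y, inC aw bw z, y <> czero p q, z <> czero p q
                   & x = cadd y z]].

Definition downclosed n (A : pred {ffun 'I_n -> nat}) : Prop :=
  forall k k' : {ffun 'I_n -> nat}, (forall i, k' i <= k i) -> A k -> A k'.

(* Main.v *)
Require Import Defs.
From mathcomp Require Import all_boot.
From Stdlib Require Import Classical.
From mathcomp Require Import zify.
Set Implicit Arguments. Unset Strict Implicit.

Section Aux.
Variables (p q : nat) (aw : 'I_p -> nat) (bw : 'I_q -> nat).

Lemma cvec_eq (x y : cvec p q) :
  x.1.1 =1 y.1.1 -> x.1.2 =1 y.1.2 -> x.2 = y.2 -> x = y.
Proof.
by case: x => [[a b] c]; case: y => [[a' b'] c'] /= /ffunP -> /ffunP -> ->.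
Qed.

Lemma caddA (x y z : cvec p q) : cadd x (cadd y z) = cadd (cadd x y) z.
Proof. by apply: cvec_eq => [i|i|] /=; rewrite ?ffunE ?addnA. Qed.

Lemma caddC (x y : cvec p q) : cadd x y = cadd y x.
Proof. by apply: cvec_eq => [i|i|] /=; rewrite ?ffunE; exact: addnC. Qed.

Lemma cadd0 (x : cvec p q) : cadd (czero p q) x = x.
Proof. by apply: cvec_eq => [i|i|] /=; rewrite ?ffunE. Qed.

Lemma cadd_inj (a b c : cvec p q) : cadd a b = cadd a c -> b = c.
Proof.
move=> E; apply: cvec_eq => [i|i|].
- by move: (congr1 (fun v : cvec p q => v.1.1 i) E) => /=; rewrite !ffunE => /addnI.
- by move: (congr1 (fun v : cvec p q => v.1.2 i) E) => /=; rewrite !ffunE => /addnI.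
- by move: (congr1 (fun v : cvec p q => v.2) E) => /= /addnI.
Qed.

Lemma wdegD n (w : 'I_n -> nat) (k k' : {ffun 'I_n -> nat}) :
  wdeg w [ffun i => k i + k' i] = wdeg w k + wdeg w k'.
Proof.
rewrite /wdeg -big_split /=; apply: eq_bigr => i _; by rewrite ffunE mulnDr.
Qed.

Lemma inC_add (x y : cvec p q) : inC aw bw x -> inC aw bw y -> inC aw bw (cadd x y).
Proof.
move=> [h1 h2] [h3 h4]; split => /=; rewrite wdegD; exact: leq_add.
Qed.

Lemma inC0 : inC aw bw (czero p q).
Proof. by split. Qed.

Lemma inC_scale j (x : cvec p q) : inC aw bw x -> inC aw bw (cscale j x).
Proof. move=> h; elim: j => [|j IH] /=; [exact: inC0 | exact: inC_add]. Qed.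

Definition csize (x : cvec p q) := \sum_(i < p) x.1.1 i + \sum_(i < q) x.1.2 i + x.2.

Lemma csizeD (x y : cvec p q) : csize (cadd x y) = csize x + csize y.
Proof.
rewrite /csize /=.
have E1 : \sum_(i < p) [ffun i => x.1.1 i + y.1.1 i] i = \sum_(i < p) x.1.1 i + \sum_(i < p) y.1.1 i.
  by rewrite -big_split; apply: eq_bigr => i _; rewrite ffunE.
have E2 : \sum_(i < q) [ffun i => x.1.2 i + y.1.2 i] i = \sum_(i < q) x.1.2 i + \sum_(i < q) y.1.2 i.
  by rewrite -big_split; apply: eq_bigr => i _; rewrite ffunE.
rewrite E1 E2.
set a := \sum_(i < p) x.1.1 i. set b := \sum_(i < p) y.1.1 i.
set c := \sum_(i < q) x.1.2 i. set d := \sum_(i < q) y.1.2 i.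
lia.
Qed.

Lemma csize0 (x : cvec p q) : x <> czero p q -> 0 < csize x.
Proof.
move=> nz; rewrite lt0n; apply/negP => /eqP E; apply: nz.
move/eqP: E; rewrite /csize !addn_eq0 => /andP [/andP [H1 H2] H3].
move: H1 H2; rewrite !sum_nat_eq0 => /forallP H1 /forallP H2.
apply: cvec_eq => [i|i|] /=; rewrite ?ffunE.
- by apply/eqP; exact: H1.
- by apply/eqP; exact: H2.
- by apply/eqP.
Qed.

Lemma exists_decomp (pi : cvec p q) : pi <> czero p q ->
  forall n (y : cvec p q), csize y <= n -> inC aw bw y ->
  exists j r, [/\ inC aw bw r, ~ cdivisible aw bw r pi & y = cadd (cscale j pi) r].
Proof.
move=> nz n; elim: n => [|n IH] y hs hy;
  (case: (classic (cdivisible aw bw y pi)) => hd;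
   [|by exists 0, y; split => //; rewrite cadd0]).
- case: hd => d [_ E]; move: hs; rewrite E csizeD.
  by have := csize0 nz; lia.
- case: hd => d [hdC E].
  have hsd : csize d <= n by move: hs; rewrite E csizeD; have := csize0 nz; lia.
  have [j [r [hr hnr Ed]]] := IH d hsd hdC.
  exists j.+1, r; split => //.
  by rewrite E Ed caddA.
Qed.

Lemma cscaleD a b (x : cvec p q) : cscale (a + b) x = cadd (cscale a x) (cscale b x).
Proof.
elim: a => [|a IH] /=; first by rewrite cadd0.
by rewrite IH caddA.
Qed.

End Aux.
Unset Implicit Arguments.

(* pis = [pi_1; ...; pi_t] (0-based: nth pis m = pi_(m+1)); index i here is
   the paper's i-1. *)
Theorem lemma15p2 (p q : nat) (aw : 'I_p -> nat) (bw : 'I_q -> nat)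
  (A : pred {ffun 'I_p -> nat}) (B : pred {ffun 'I_q -> nat})
  (hA : downclosed A) (hB : downclosed B)
  (pis : seq (cvec p q)) (hu : uniq pis)
  (hpis : forall x, x \in pis <-> (cprime aw bw x /\ inCstar aw bw A B x))
  (i : nat) (hi : i < size pis)
  (x : cvec p q) (hx : inCstar aw bw A B x)
  (hnd : forall m, m < i -> ~ cdivisible aw bw x (nth (czero p q) pis m)) :
  exists! jq : nat * cvec p q,
    [/\ inCstar aw bw A B jq.2,
        forall m, m <= i -> ~ cdivisible aw bw jq.2 (nth (czero p q) pis m)
      & x = cadd (cscale jq.1 (nth (czero p q) pis i)) jq.2].
Proof.
set pi := nth (czero p q) pis i.
have [[piC piNZ _] _] : cprime aw bw pi /\ inCstar aw bw A B pi.
  by apply/hpis; exact: mem_nth.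
case: hx => [xC [xA xB]].
have [j [r [rC rnd Ex]]] := exists_decomp piNZ (leqnn (csize x)) xC.
exists (j, r) => /=; split.
  split.
  - split => //; split.
    + apply: hA xA => i0; rewrite Ex /= ffunE; exact: leq_addl.
    + apply: hB xB => i0; rewrite Ex /= ffunE; exact: leq_addl.
  - move=> m; rewrite leq_eqVlt => /orP [/eqP ->|hm] //.
    move=> [d [dC /= Er]]; apply: (hnd m hm).
    exists (cadd (cscale j pi) d); split; first by apply: inC_add => //; exact: inC_scale.
    by rewrite Ex Er caddA (caddC _ (nth _ _ _)) caddA.
  - exact: Ex.
move=> [j' r'] /= [[r'C _] r'nd Ex'].
have key : forall a b (s t : cvec p q), inC aw bw s ->
    ~ cdivisible aw bw t pi -> cadd (cscale a pi) s = cadd (cscale b pi) t -> a <= b.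
  move=> a b s t sC tn E; rewrite leqNgt; apply/negP => hab.
  apply: tn; exists (cadd (cscale (a - b).-1 pi) s); split.
    by apply: inC_add => //; exact: inC_scale.
  set k := (a - b).-1.
  have Ea : a = b + k.+1 by rewrite /k; lia.
  move: E; rewrite {1}Ea cscaleD -caddA => /cadd_inj <- /=.
  by rewrite caddA.
have h1 : j <= j' by apply: (key j j' r r' rC (r'nd i (leqnn i))); rewrite -Ex.
have h2 : j' <= j by apply: (key j' j r' r r'C rnd); rewrite -Ex'.
have ej : j = j' by apply/eqP; rewrite eqn_leq h1 h2.
subst j'; move: Ex; rewrite Ex' => /cadd_inj ->; done.
Qed.
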